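(* Let $f\in\mathcal{S}(\mathbb{R})$ and fix $n\in\{0,1,2,3,\dots\}$. Then $D^{n+\frac1k}f(x)\to D^n f(x)$ as $k\to\infty$, uniformly in $x\in\mathbb{R}$.
   Context: $\mathcal{S}(\mathbb{R})$ is the Schwartz space. The Fourier transform is $\hat f(p)=\frac{1}{\sqrt{2\pi}}\int_{\mathbb{R}}e^{-ipx}f(x)\,dx$. For $\alpha\ge0$, $D^\alpha f(x)=\frac{1}{\sqrt{2\pi}}\int_{\mathbb{R}}e^{ipx}(ip)^\alpha\hat f(p)\,dp$, with $i^\alpha=\cos(\alpha\pi/2)+i\sin(\alpha\pi/2)$ and $(ip)^\alpha=i^\alpha p^\alpha$ for $p\ge0$, $(ip)^\alpha=(-i)^\alpha|p|^\alpha$ for $p<0$ (principal branch). For integer $n$, $D^n f=\frac{d^n f}{dx^n}$. *)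

(* Defs.v *)
From Stdlib Require Import Reals.
From Coquelicot Require Import Coquelicot.
Open Scope R_scope.

Definition schwartz_R (g : R -> R) : Prop :=
  (forall (m : nat) (x : R), ex_derive_n g m x) /\
  (forall a b : nat, exists M : R, forall x : R, Rabs (x ^ a * Derive_n g b x) <= M).

Definition schwartz (f : R -> C) : Prop :=
  schwartz_R (fun x => Re (f x)) /\ schwartz_R (fun x => Im (f x)).

Definition cexpi (t : R) : C := (cos t, sin t).

Definition int_R (h : R -> C) : C :=
  @RInt_gen C_R_CompleteNormedModule h (Rbar_locally m_infty) (Rbar_locally p_infty).

Definition fourier (f : R -> C) (p : R) : C :=
  Cmult (RtoC (/ sqrt (2 * PI))) (int_R (fun x => Cmult (cexpi (- (p * x))) (f x))).

(* p^alpha for p >= 0, alpha >= 0, with 0^0 = 1 and 0^alpha = 0 for alpha > 0 *)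
Definition rpow (p alpha : R) : R :=
  if Req_EM_T p 0 then (if Req_EM_T alpha 0 then 1 else 0) else Rpower p alpha.

Definition i_pow (alpha : R) : C := (cos (alpha * PI / 2), sin (alpha * PI / 2)).
Definition mi_pow (alpha : R) : C := (cos (alpha * PI / 2), - sin (alpha * PI / 2)).

(* (ip)^alpha, principal branch *)
Definition ip_pow (p alpha : R) : C :=
  if Rle_dec 0 p then Cmult (i_pow alpha) (RtoC (rpow p alpha))
  else Cmult (mi_pow alpha) (RtoC (rpow (Rabs p) alpha)).

Definition fracD (alpha : R) (f : R -> C) (x : R) : C :=
  Cmult (RtoC (/ sqrt (2 * PI)))
    (int_R (fun p => Cmult (Cmult (cexpi (p * x)) (ip_pow p alpha)) (fourier f p))).

(* Main.v *)
Require Import Defs.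
From Stdlib Require Import Reals.
From Coquelicot Require Import Coquelicot.
From Stdlib Require Import Lra Lia Psatz FunctionalExtensionality.
Open Scope R_scope.


Lemma normC (z : C) : @norm R_AbsRing C_R_NormedModule z = Cmod z.
Proof.
  destruct z as [x y]. unfold norm; simpl. unfold prod_norm, Cmod; simpl.
  change (norm x) with (Rabs x). change (norm y) with (Rabs y).
  f_equal. rewrite !Rmult_1_r. rewrite <- !Rabs_mult.
  rewrite !Rabs_right; try lra; nra.
Qed.

Lemma Cmod_le_sum (z : C) : Cmod z <= Rabs (fst z) + Rabs (snd z).
Proof.
  destruct z as [x y]. unfold Cmod; simpl.
  pose proof (Rabs_pos x); pose proof (Rabs_pos y).
  apply Rsqr_incr_0_var.
  - rewrite Rsqr_sqrt by nra. unfold Rsqr.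
    rewrite !Rmult_1_r.
    replace (x*x) with (Rabs x * Rabs x) by (rewrite <- Rabs_mult; apply Rabs_right; nra).
    replace (y*y) with (Rabs y * Rabs y) by (rewrite <- Rabs_mult; apply Rabs_right; nra).
    nra.
  - lra.
Qed.

Lemma Rabs_fst_le (z : C) : Rabs (fst z) <= Cmod z.
Proof. apply re_le_Cmod. Qed.
Lemma Rabs_snd_le (z : C) : Rabs (snd z) <= Cmod z.
Proof. pose proof (Rmax_Cmod z). pose proof (Rmax_r (Rabs (fst z)) (Rabs (snd z))). lra. Qed.

Lemma Cmod_cexpi t : Cmod (cexpi t) = 1.
Proof.
  unfold cexpi, Cmod; simpl. rewrite !Rmult_1_r.
  rewrite <- (sqrt_1). f_equal. pose proof (sin2_cos2 t). unfold Rsqr in H. lra.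
Qed.

Notation FF := (filter_prod (Rbar_locally m_infty) (Rbar_locally p_infty)).

Lemma far (T : R) : FF (fun ab => fst ab < -T /\ T < snd ab).
Proof.
  apply (Filter_prod _ _ _ (fun a => a < -T) (fun b => T < b)).
  - exists (-T); auto.
  - exists T; auto.
  - intros; simpl; auto.
Qed.

Lemma far_inv (P : R * R -> Prop) : FF P -> exists T, 0 <= T /\ forall a b, a < -T -> T < b -> P (a,b).
Proof.
  intros [Q R' [M1 H1] [M2 H2] H].
  exists (Rabs M1 + Rabs M2). split. pose proof (Rabs_pos M1); pose proof (Rabs_pos M2); lra.
  intros a b Ha Hb. apply H.
  - apply H1. pose proof (Rle_abs (-M1)). rewrite Rabs_Ropp in H0. pose proof (Rabs_pos M2). lra.
  - apply H2. pose proof (Rle_abs M2). pose proof (Rabs_pos M1). lra.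
Qed.

Lemma gen_lim (g : R -> C) (l : C) :
  is_RInt_gen g (Rbar_locally m_infty) (Rbar_locally p_infty) l ->
  forall eps, 0 < eps -> exists T, 0 <= T /\ forall a b, a < -T -> T < b ->
    exists z, is_RInt g a b z /\ Cmod (Cminus z l) < eps.
Proof.
  intros H eps Heps.
  assert (He2 : 0 < eps / 2) by lra.
  pose proof (proj1 (filterlimi_locally _ l) H (mkposreal _ He2)) as H2.
  apply far_inv in H2. destruct H2 as [T [HT H2]]. exists T; split; auto.
  intros a b Ha Hb. destruct (H2 a b Ha Hb) as [z [Hz Hb']]. exists z; split; auto.
  pose proof (C_NormedModule_mixin_compat2 l z (mkposreal _ He2) Hb') as H3.
  simpl in H3.
  assert (sqrt 2 < 2). { rewrite <- (sqrt_square 2) at 2 by lra. apply sqrt_lt_1; lra. }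
  unfold Cminus. change (Cmod (minus z l) < eps). eapply Rlt_le_trans; [exact H3|]; nra.
Qed.

Notation RIntC := (@RInt C_R_CompleteNormedModule).

Definition hb (A D s x : R) := A / (1 + x^2) + D / (1 + (x/s)^2).
Definition Hb (A D s x : R) := A * atan x + D * s * atan (x / s).

Lemma hb_deriv A D s x : 0 < s -> is_derive (Hb A D s) x (hb A D s x).
Proof.
  intros Hs. unfold Hb, hb. auto_derive. auto.
  field. split; try lra. nra. 
Qed.

Lemma hb_cont A D s x : 0 < s -> continuous (hb A D s) x.
Proof.
  intros Hs. apply (@ex_derive_continuous R_AbsRing R_NormedModule). unfold hb. auto_derive.
  split. nra. split. nra. auto.
Qed.

Lemma hb_int A D s a b : 0 < s -> is_RInt (hb A D s) a b (Hb A D s b - Hb A D s a).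
Proof.
  intros Hs. apply (is_RInt_derive (Hb A D s) (hb A D s)).
  - intros; apply hb_deriv; auto.
  - intros; apply hb_cont; auto.
Qed.

Lemma Hb_bound A D s a b : 0 < s -> 0 <= A -> 0 <= D -> a <= b -> Hb A D s b - Hb A D s a <= (A + D * s) * PI.
Proof.
  intros Hs HA HD Hab. unfold Hb.
  pose proof (atan_bound a); pose proof (atan_bound b).
  pose proof (atan_bound (a/s)); pose proof (atan_bound (b/s)).
  assert (0 <= D * s) by nra. nra.
Qed.

Lemma Cmod_diff_sym (u v : C) : Cmod (Cminus u v) = Cmod (Cminus v u).
Proof. rewrite <- Cmod_opp. f_equal. ring. Qed.

Lemma Cmod_approx (l z : C) : Cmod l <= Cmod z + Cmod (Cminus z l).
Proof.
  replace l with (Cplus z (Cminus l z)) at 1 by ring.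
  rewrite Cmod_diff_sym. apply Cmod_triangle.
Qed.

Lemma NB (g : R -> C) (l : C) A D s : 0 < s -> 0 <= A -> 0 <= D ->
  is_RInt_gen g (Rbar_locally m_infty) (Rbar_locally p_infty) l ->
  (forall x, Cmod (g x) <= hb A D s x) -> Cmod l <= (A + D * s) * PI.
Proof.
  intros Hs HA HD Hg Hb'. apply le_epsilon. intros eps He.
  destruct (gen_lim g l Hg eps He) as [T [HT HH]].
  destruct (HH (-T-1) (T+1)) as [z [Hz Hzl]]; try lra.
  pose proof (norm_RInt_le g (hb A D s) (-T-1) (T+1) z _ ltac:(lra)
     (fun x _ => eq_ind_r (fun r => r <= _) (Hb' x) (normC (g x))) Hz (hb_int A D s (-T-1) (T+1) Hs)) as H1.
  rewrite normC in H1.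
  pose proof (Hb_bound A D s (-T-1) (T+1) Hs HA HD ltac:(lra)).
  pose proof (Cmod_approx l z). lra.
Qed.

Lemma RInt_bound_any (g : R -> C) K a b : ex_RInt g a b -> 0 <= K ->
  (forall x, Cmod (g x) <= hb K 0 1 x) ->
  Cmod (RIntC g a b) <= Rabs (Hb K 0 1 b - Hb K 0 1 a).
Proof.
  intros Hex HK Hg.
  assert (Hn : forall x, @norm R_AbsRing C_R_NormedModule (g x) <= hb K 0 1 x) by (intros; rewrite normC; auto).
  destruct (Rle_or_lt a b) as [Hab | Hab].
  - pose proof (norm_RInt_le g (hb K 0 1) a b _ _ Hab (fun x _ => Hn x) (RInt_correct (V:=C_R_CompleteNormedModule) g a b Hex) (hb_int K 0 1 a b ltac:(lra))).
    rewrite normC in H. eapply Rle_trans; [exact H| apply Rle_abs].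
  - assert (Hex' : ex_RInt g b a) by (apply ex_RInt_swap; auto).
    pose proof (norm_RInt_le g (hb K 0 1) b a _ _ (Rlt_le _ _ Hab) (fun x _ => Hn x) (RInt_correct (V:=C_R_CompleteNormedModule) g b a Hex') (hb_int K 0 1 b a ltac:(lra))).
    rewrite normC in H. rewrite <- (opp_RInt_swap (V:=C_R_CompleteNormedModule) g b a Hex').
    change (Cmod (Copp (RIntC g b a)) <= Rabs (Hb K 0 1 b - Hb K 0 1 a)).
    rewrite Cmod_opp. eapply Rle_trans; [exact H|]. rewrite <- Rabs_Ropp. 
    replace (- (Hb K 0 1 b - Hb K 0 1 a)) with (Hb K 0 1 a - Hb K 0 1 b) by ring. apply Rle_abs.
Qed.

Lemma atan_tail eps : 0 < eps -> exists T, forall x, T < x -> PI/2 - eps < atan x.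
Proof.
  intros He. pose proof PI_RGT_0.
  set (e := Rmin eps (PI/4)).
  assert (0 < e) by (unfold e; apply Rmin_glb_lt; lra).
  assert (e <= eps) by apply Rmin_l. assert (e <= PI/4) by apply Rmin_r.
  exists (tan (PI/2 - e)). intros x Hx.
  apply atan_increasing in Hx. rewrite atan_tan in Hx by lra. lra.
Qed.

Lemma ex_gen (g : R -> C) K : (forall a b, ex_RInt g a b) ->
  (forall x, Cmod (g x) <= hb K 0 1 x) ->
  ex_RInt_gen g (Rbar_locally m_infty) (Rbar_locally p_infty).
Proof.
  intros Hex Hg.
  assert (HK : 0 <= K).
  { pose proof (Hg 0). pose proof (Cmod_ge_0 (g 0)). unfold hb in H. 
    replace ((0/1)^2) with 0 in H by field. replace (1 + 0^2) with 1 in H by ring. 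
    unfold Rdiv in H. rewrite Rinv_1, !Rmult_1_r, Rmult_0_l, Rplus_0_r in H. lra. }
  unfold ex_RInt_gen, is_RInt_gen.
  apply (filterlimi_locally_cauchy (U := C_R_CompleteNormedModule) (F := FF)).
  { apply filter_forall. intros [a b]. split.
    - apply Hex.
    - intros y1 y2 H1 H2. rewrite <- (is_RInt_unique (V:=C_R_CompleteNormedModule) _ _ _ _ H1). apply is_RInt_unique; auto. }
  intros eps.
  assert (He : 0 < eps / (2 * (K + 1))).
  { apply Rdiv_lt_0_compat. apply cond_pos. lra. }
  destruct (atan_tail _ He) as [T HT].
  exists (fun ab => fst ab < - Rabs T /\ Rabs T < snd ab). split; [apply far|].
  intros [u1 u2] [v1 v2] [Hu1 Hu2] [Hv1 Hv2] u' v' Hu Hv. simpl in *.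
  apply (@norm_compat1 R_AbsRing C_R_NormedModule). rewrite normC.
  apply (is_RInt_unique (V:=C_R_CompleteNormedModule)) in Hu. apply (is_RInt_unique (V:=C_R_CompleteNormedModule)) in Hv. subst u' v'.
  assert (E : @minus C_R_NormedModule (RIntC g v1 v2) (RIntC g u1 u2) = Cplus (RIntC g v1 u1) (RIntC g u2 v2)).
  { rewrite <- (RInt_Chasles (V:=C_R_CompleteNormedModule) g v1 u1 v2) by auto.
    rewrite <- (RInt_Chasles (V:=C_R_CompleteNormedModule) g u1 u2 v2) by auto.
    change (Cminus (Cplus (RIntC g v1 u1) (Cplus (RIntC g u1 u2) (RIntC g u2 v2))) (RIntC g u1 u2) =
      Cplus (RIntC g v1 u1) (RIntC g u2 v2)). ring. }
  rewrite E. eapply Rle_lt_trans; [apply Cmod_triangle|].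
  pose proof (RInt_bound_any g K v1 u1 (Hex _ _) HK Hg).
  pose proof (RInt_bound_any g K u2 v2 (Hex _ _) HK Hg).
  unfold Hb in *.
  assert (Hat : forall x y, Rabs T < x -> Rabs T < y -> Rabs (atan x - atan y) < eps / (2 * (K + 1))).
  { intros x y Hx Hy. pose proof (Rle_abs T).
    pose proof (HT x ltac:(lra)). pose proof (HT y ltac:(lra)).
    pose proof (atan_bound x). pose proof (atan_bound y).
    apply Rabs_def1; lra. }
  assert (Hat' : forall x y, x < - Rabs T -> y < - Rabs T -> Rabs (atan x - atan y) < eps / (2 * (K + 1))).
  { intros x y Hx Hy. replace (atan x - atan y) with (atan (-y) - atan (-x)).
    apply Hat; lra. rewrite !atan_opp; ring. }
  pose proof (Hat u2 v2 Hu2 Hv2). pose proof (Hat' u1 v1 Hu1 Hv1).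
  replace (K * atan u1 + 0 * 1 * atan (u1 / 1) - (K * atan v1 + 0 * 1 * atan (v1 / 1))) with (K * (atan u1 - atan v1)) in H by ring.
  replace (K * atan v2 + 0 * 1 * atan (v2 / 1) - (K * atan u2 + 0 * 1 * atan (u2 / 1))) with (K * (atan v2 - atan u2)) in H0 by ring.
  rewrite Rabs_mult, Rabs_right in H, H0 by lra.
  rewrite Rabs_minus_sym in H1.
  assert (K * Rabs (atan u1 - atan v1) <= K * (eps / (2 * (K + 1)))). { apply Rmult_le_compat_l. lra. lra. }
  assert (K * Rabs (atan v2 - atan u2) <= K * (eps / (2 * (K + 1)))) by (apply Rmult_le_compat_l; lra).
  assert (K * (eps / (2 * (K + 1))) < eps / 2).
  { pose proof (cond_pos eps). unfold Rdiv. apply (Rmult_lt_reg_r (2 * (K+1))). lra.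
    field_simplify; try lra. }
  lra.
Qed.

Lemma cR_mult (f g : R -> R) x : continuous f x -> continuous g x -> continuous (fun y => f y * g y) x.
Proof. intros; apply (@continuous_mult R_UniformSpace R_AbsRing f g x); auto. Qed.
Lemma cR_plus (f g : R -> R) x : continuous f x -> continuous g x -> continuous (fun y => f y + g y) x.
Proof. intros; apply (@continuous_plus R_UniformSpace R_AbsRing R_NormedModule f g x); auto. Qed.
Lemma cR_opp (f : R -> R) x : continuous f x -> continuous (fun y => - f y) x.
Proof. intros; apply (@continuous_opp R_UniformSpace R_AbsRing R_NormedModule f x); auto. Qed.
Lemma cR_minus (f g : R -> R) x : continuous f x -> continuous g x -> continuous (fun y => f y - g y) x.
Proof. intros; apply (@continuous_minus R_UniformSpace R_AbsRing R_NormedModule f g x); auto. Qed.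
Lemma cR_const (c : R) x : continuous (fun _ : R => c) x.
Proof. apply (@continuous_const R_UniformSpace R_UniformSpace). Qed.
Lemma cR_der (f : R -> R) x : ex_derive f x -> continuous f x.
Proof. apply (@ex_derive_continuous R_AbsRing R_NormedModule). Qed.

Lemma ex_RInt_C (g : R -> C) :
  (forall x, continuous (fun y => fst (g y)) x) -> (forall x, continuous (fun y => snd (g y)) x) ->
  forall a b, @ex_RInt C_R_NormedModule g a b.
Proof.
  intros H1 H2 a b.
  apply (@ex_RInt_fct_extend_pair R_NormedModule R_NormedModule).
  - apply (@ex_RInt_continuous R_CompleteNormedModule). intros; apply H1.
  - apply (@ex_RInt_continuous R_CompleteNormedModule). intros; apply H2.
Qed.

Lemma hb0 K x : hb K 0 1 x = K / (1 + x^2).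
Proof. unfold hb. unfold Rdiv. rewrite Rinv_1, Rmult_0_l, Rplus_0_r. reflexivity. Qed.

Lemma le_div_h (u M x : R) : u * (1 + x^2) <= M -> u <= M / (1 + x^2).
Proof.
  intros H. assert (0 < 1 + x^2) by nra. unfold Rdiv.
  apply (Rmult_le_reg_r (1 + x^2)); auto. rewrite Rmult_assoc, Rinv_l by lra. lra.
Qed.

Lemma sch_bound (g : R -> R) (j : nat) : schwartz_R g ->
  exists M, forall x, Rabs (Derive_n g j x) <= M / (1 + x^2).
Proof.
  intros [_ Hb]. destruct (Hb 0%nat j) as [M0 H0]. destruct (Hb 2%nat j) as [M2 H2].
  exists (M0 + M2). intros x. specialize (H0 x). specialize (H2 x).
  rewrite Rabs_mult in H0, H2. simpl in H0. rewrite Rabs_R1, Rmult_1_l in H0.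
  rewrite <- RPow_abs in H2. 
  assert (Rabs x ^ 2 = x ^ 2) by (rewrite RPow_abs; apply Rabs_right; nra).
  rewrite H in H2. apply le_div_h. nra.
Qed.

Lemma sch_bound_x (g : R -> R) : schwartz_R g ->
  exists M, forall x, Rabs x * Rabs (g x) <= M / (1 + x^2).
Proof.
  intros [_ Hb]. destruct (Hb 1%nat 0%nat) as [M0 H0]. destruct (Hb 3%nat 0%nat) as [M2 H2].
  exists (M0 + M2). intros x. specialize (H0 x). specialize (H2 x). simpl in H0, H2.
  rewrite !Rmult_1_r in H0, H2. rewrite !Rabs_mult in H0. rewrite !Rabs_mult in H2.
  assert (Rabs x * Rabs x = x^2) by (rewrite <- Rabs_mult; rewrite Rabs_right; [ring|nra]).
  apply le_div_h. 
  assert (E: Rabs x * Rabs (g x) * (1 + x^2) = Rabs x * Rabs (g x) + Rabs x * (Rabs x * Rabs x) * Rabs (g x)) by (rewrite H; ring). rewrite E. lra.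
Qed.

Lemma sch_cont (g : R -> R) j x : schwartz_R g -> continuous (Derive_n g j) x.
Proof. intros [Hd _]. apply cR_der. apply (Hd (S j)). Qed.

Lemma sch_der (g : R -> R) j x : schwartz_R g -> is_derive (Derive_n g j) x (Derive_n g (S j) x).
Proof. intros [Hd _]. apply Derive_correct. apply (Hd (S j)). Qed.

Definition fj (f : R -> C) (j : nat) (x : R) : C :=
  (Derive_n (fun y => Re (f y)) j x, Derive_n (fun y => Im (f y)) j x).

Lemma fj0 f : fj f 0 = f.
Proof. apply functional_extensionality. intros x. unfold fj; simpl. destruct (f x); reflexivity. Qed.

Lemma fj_bound f j : schwartz f -> exists K, 0 <= K /\ forall x, Cmod (fj f j x) <= K / (1 + x^2).
Proof.
  intros [Hr Hi]. destruct (sch_bound _ j Hr) as [M1 H1]. destruct (sch_bound _ j Hi) as [M2 H2].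
  exists (M1 + M2). split.
  - specialize (H1 0). specialize (H2 0). pose proof (Rabs_pos (Derive_n (fun y => Re (f y)) j 0)).
    pose proof (Rabs_pos (Derive_n (fun y => Im (f y)) j 0)).
    replace (1 + 0^2) with 1 in H1, H2 by ring. unfold Rdiv in H1, H2. rewrite Rinv_1, Rmult_1_r in H1, H2. lra.
  - intros x. eapply Rle_trans; [apply Cmod_le_sum|]. unfold fj; cbn [fst snd].
    specialize (H1 x); specialize (H2 x). unfold Rdiv in *. lra.
Qed.

Lemma f_bound_x f : schwartz f -> exists K, 0 <= K /\ forall x, Rabs x * Cmod (f x) <= K / (1 + x^2).
Proof.
  intros [Hr Hi]. destruct (sch_bound_x _ Hr) as [M1 H1]. destruct (sch_bound_x _ Hi) as [M2 H2].
  exists (M1 + M2). split.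
  - specialize (H1 0). specialize (H2 0). rewrite Rabs_R0 in H1, H2.
    replace (1 + 0^2) with 1 in H1, H2 by ring. unfold Rdiv in H1, H2. rewrite Rinv_1, Rmult_1_r in H1, H2. lra.
  - intros x. pose proof (Cmod_le_sum (f x)). pose proof (Rabs_pos x).
    specialize (H1 x); specialize (H2 x). unfold Rdiv in *.
    assert (Rabs x * Cmod (f x) <= Rabs x * (Rabs (fst (f x)) + Rabs (snd (f x)))) by (apply Rmult_le_compat_l; auto).
    unfold Re, Im in *. lra.
Qed.

Lemma fj_cont_fst f j x : schwartz f -> continuous (fun y => fst (fj f j y)) x.
Proof. intros [Hr Hi]. unfold fj; simpl. apply sch_cont; auto. Qed.
Lemma fj_cont_snd f j x : schwartz f -> continuous (fun y => snd (fj f j y)) x.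
Proof. intros [Hr Hi]. unfold fj; simpl. apply sch_cont; auto. Qed.

Definition gj (f : R -> C) (j : nat) (p x : R) : C := Cmult (cexpi (- (p * x))) (fj f j x).
Definition Gj (f : R -> C) (j : nat) (p : R) : C := int_R (gj f j p).

Lemma cos_lin_cont p x : continuous (fun y => cos (- (p * y))) x.
Proof. apply cR_der. auto_derive. auto. Qed.
Lemma sin_lin_cont p x : continuous (fun y => sin (- (p * y))) x.
Proof. apply cR_der. auto_derive. auto. Qed.

Lemma gj_exR f j p : schwartz f -> forall a b, @ex_RInt C_R_NormedModule (gj f j p) a b.
Proof.
  intros Hf. apply ex_RInt_C; intros x.
  - change (continuous (fun y => cos (- (p * y)) * fst (fj f j y) - sin (- (p * y)) * snd (fj f j y)) x).
    apply cR_minus; apply cR_mult; auto using cos_lin_cont, sin_lin_cont, fj_cont_fst, fj_cont_snd.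
  - change (continuous (fun y => cos (- (p * y)) * snd (fj f j y) + sin (- (p * y)) * fst (fj f j y)) x).
    apply cR_plus; apply cR_mult; auto using cos_lin_cont, sin_lin_cont, fj_cont_fst, fj_cont_snd.
Qed.

Lemma gj_bound f j : schwartz f -> exists K, 0 <= K /\ forall p x, Cmod (gj f j p x) <= hb K 0 1 x.
Proof.
  intros Hf. destruct (fj_bound f j Hf) as [K [HK H]]. exists K; split; auto.
  intros p x. rewrite hb0. unfold gj. rewrite Cmod_mult, Cmod_cexpi, Rmult_1_l. auto.
Qed.

Lemma gj_is f j p : schwartz f -> is_RInt_gen (gj f j p) (Rbar_locally m_infty) (Rbar_locally p_infty) (Gj f j p).
Proof.
  intros Hf. destruct (gj_bound f j Hf) as [K [HK H]].
  unfold Gj, int_R. apply (RInt_gen_correct (V:=C_R_CompleteNormedModule)).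
  apply (ex_gen _ K); auto. apply gj_exR; auto.
Qed.

Lemma Gj_bound f j : schwartz f -> exists K, 0 <= K /\ forall p, Cmod (Gj f j p) <= K.
Proof.
  intros Hf. destruct (gj_bound f j Hf) as [K [HK H]]. exists ((K + 0 * 1) * PI). split.
  - pose proof PI_RGT_0. nra.
  - intros p. apply (NB (gj f j p)); auto; try lra. apply gj_is; auto.
Qed.

Lemma gj_der_fst f j p x : schwartz f ->
  is_derive (fun y => fst (gj f j p y)) x (fst (gj f (S j) p x) + p * snd (gj f j p x)).
Proof.
  intros [Hr Hi].
  pose proof (sch_der _ j x Hr) as Dr. pose proof (sch_der _ j x Hi) as Di.
  change (is_derive (fun y => cos (- (p * y)) * Derive_n (fun y => Re (f y)) j y - sin (- (p * y)) * Derive_n (fun y => Im (f y)) j y) x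
    (cos (- (p * x)) * Derive_n (fun y => Re (f y)) (S j) x - sin (- (p * x)) * Derive_n (fun y => Im (f y)) (S j) x
     + p * (cos (- (p * x)) * Derive_n (fun y => Im (f y)) j x + sin (- (p * x)) * Derive_n (fun y => Re (f y)) j x))).
  auto_derive.
  - split; [eexists; exact Dr | split; [eexists; exact Di | auto]].
  - change (Derive (fun x0 => Derive_n (fun y => Re (f y)) j x0) x) with (Derive_n (fun y => Re (f y)) (S j) x).
    change (Derive (fun x0 => Derive_n (fun y => Im (f y)) j x0) x) with (Derive_n (fun y => Im (f y)) (S j) x).
    ring.
Qed.

Lemma gj_der_snd f j p x : schwartz f ->
  is_derive (fun y => snd (gj f j p y)) x (snd (gj f (S j) p x) - p * fst (gj f j p x)).
Proof.
  intros [Hr Hi].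
  pose proof (sch_der _ j x Hr) as Dr. pose proof (sch_der _ j x Hi) as Di.
  change (is_derive (fun y => cos (- (p * y)) * Derive_n (fun y => Im (f y)) j y + sin (- (p * y)) * Derive_n (fun y => Re (f y)) j y) x
    (cos (- (p * x)) * Derive_n (fun y => Im (f y)) (S j) x + sin (- (p * x)) * Derive_n (fun y => Re (f y)) (S j) x
     - p * (cos (- (p * x)) * Derive_n (fun y => Re (f y)) j x - sin (- (p * x)) * Derive_n (fun y => Im (f y)) j x))).
  auto_derive.
  - split; [eexists; exact Di | split; [eexists; exact Dr | auto]].
  - change (Derive (fun x0 => Derive_n (fun y => Re (f y)) j x0) x) with (Derive_n (fun y => Re (f y)) (S j) x).
    change (Derive (fun x0 => Derive_n (fun y => Im (f y)) j x0) x) with (Derive_n (fun y => Im (f y)) (S j) x).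
    ring.
Qed.


Lemma gj_cont_fst f j p x : schwartz f -> continuous (fun y => fst (gj f j p y)) x.
Proof.
  intros Hf.
  change (continuous (fun y => cos (- (p * y)) * fst (fj f j y) - sin (- (p * y)) * snd (fj f j y)) x).
  apply cR_minus; apply cR_mult; auto using cos_lin_cont, sin_lin_cont, fj_cont_fst, fj_cont_snd.
Qed.
Lemma gj_cont_snd f j p x : schwartz f -> continuous (fun y => snd (gj f j p y)) x.
Proof.
  intros Hf.
  change (continuous (fun y => cos (- (p * y)) * snd (fj f j y) + sin (- (p * y)) * fst (fj f j y)) x).
  apply cR_plus; apply cR_mult; auto using cos_lin_cont, sin_lin_cont, fj_cont_fst, fj_cont_snd.
Qed.

Lemma RInt_uniqR (g : R -> R) a b l1 l2 : is_RInt g a b l1 -> is_RInt g a b l2 -> l1 = l2.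
Proof.
  intros H1 H2. apply (is_RInt_unique (V:=R_CompleteNormedModule)) in H1.
  apply (is_RInt_unique (V:=R_CompleteNormedModule)) in H2. congruence.
Qed.

Lemma ibp f j p a b z0 z1 : schwartz f ->
  @is_RInt C_R_NormedModule (gj f j p) a b z0 -> @is_RInt C_R_NormedModule (gj f (S j) p) a b z1 ->
  z1 = Cplus (Cminus (gj f j p b) (gj f j p a)) (Cmult (0, p) z0).
Proof.
  intros Hf H0 H1.
  pose proof (@is_RInt_fct_extend_fst R_NormedModule R_NormedModule _ _ _ _ H0) as H0f.
  pose proof (@is_RInt_fct_extend_snd R_NormedModule R_NormedModule _ _ _ _ H0) as H0s.
  pose proof (@is_RInt_fct_extend_fst R_NormedModule R_NormedModule _ _ _ _ H1) as H1f.
  pose proof (@is_RInt_fct_extend_snd R_NormedModule R_NormedModule _ _ _ _ H1) as H1s.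
  simpl in H0f, H0s, H1f, H1s.
  assert (Df : is_RInt (fun x => fst (gj f (S j) p x) + p * snd (gj f j p x)) a b
     (fst (gj f j p b) - fst (gj f j p a))).
  { apply (is_RInt_derive (V:=R_CompleteNormedModule) (fun y => fst (gj f j p y))).
    - intros; apply gj_der_fst; auto.
    - intros; apply cR_plus. apply gj_cont_fst; auto. apply cR_mult. apply cR_const. apply gj_cont_snd; auto. }
  assert (Ds : is_RInt (fun x => snd (gj f (S j) p x) - p * fst (gj f j p x)) a b
     (snd (gj f j p b) - snd (gj f j p a))).
  { apply (is_RInt_derive (V:=R_CompleteNormedModule) (fun y => snd (gj f j p y))).
    - intros; apply gj_der_snd; auto.
    - intros; apply cR_minus. apply gj_cont_snd; auto. apply cR_mult. apply cR_const. apply gj_cont_fst; auto. }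
  assert (Ef : fst z1 = (fst (gj f j p b) - fst (gj f j p a)) - p * snd z0).
  { apply (RInt_uniqR (fun x => fst (gj f (S j) p x)) a b); auto.
    pose proof (is_RInt_minus (V:=R_NormedModule) _ _ a b _ _ Df (is_RInt_scal (V:=R_NormedModule) _ a b p _ H0s)) as HH.
    eapply is_RInt_ext; [|exact HH]. intros x _. unfold minus, plus, opp, scal; simpl; unfold mult; simpl. ring. }
  assert (Es : snd z1 = (snd (gj f j p b) - snd (gj f j p a)) + p * fst z0).
  { apply (RInt_uniqR (fun x => snd (gj f (S j) p x)) a b); auto.
    pose proof (is_RInt_plus (V:=R_NormedModule) _ _ a b _ _ Ds (is_RInt_scal (V:=R_NormedModule) _ a b p _ H0f)) as HH.
    eapply is_RInt_ext; [|exact HH]. intros x _. unfold minus, plus, opp, scal; simpl; unfold mult; simpl. ring. }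
  destruct z1 as [z11 z12]. destruct z0 as [z01 z02]. simpl in Ef, Es.
  unfold Cplus, Cminus, Cmult, Copp, Cplus; simpl. f_equal; lra.
Qed.

Lemma Cmod_ip p : Cmod (0, p) = Rabs p.
Proof.
  unfold Cmod; simpl. replace (0 * (0 * 1) + p * (p * 1)) with (p²) by (unfold Rsqr; ring).
  apply sqrt_Rsqr_abs.
Qed.

Lemma C_eq_small (u v : C) : (forall eps, 0 < eps -> Cmod (Cminus u v) <= eps) -> u = v.
Proof.
  intros H. assert (Cmod (Cminus u v) = 0).
  { apply Rle_antisym. apply le_epsilon. intros e He. rewrite Rplus_0_l. auto. apply Cmod_ge_0. }
  apply Cmod_eq_0 in H0. 
  replace u with (Cplus (Cminus u v) v) by ring. rewrite H0. ring.
Qed.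

Lemma div_le_h (u M x : R) : M <= u * (1 + x^2) -> M / (1 + x^2) <= u.
Proof.
  intros H. assert (0 < 1 + x^2) by nra. unfold Rdiv.
  apply (Rmult_le_reg_r (1 + x^2)); auto. rewrite Rmult_assoc, Rinv_l by lra. lra.
Qed.

Lemma Gj_rel f j p : schwartz f -> Gj f (S j) p = Cmult (0, p) (Gj f j p).
Proof.
  intros Hf. apply C_eq_small. intros eps He.
  set (e := eps / (3 + Rabs p)).
  assert (He' : 0 < e) by (unfold e; apply Rdiv_lt_0_compat; [lra| pose proof (Rabs_pos p); lra]).
  destruct (gen_lim _ _ (gj_is f (S j) p Hf) e He') as [T1 [HT1 H1]].
  destruct (gen_lim _ _ (gj_is f j p Hf) e He') as [T0 [HT0 H0]].
  destruct (gj_bound f j Hf) as [K [HK HB]].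
  set (T := T1 + T0 + K / e + 1).
  assert (HKe : 0 <= K / e) by (apply Rdiv_le_0_compat; lra).
  destruct (H1 (-T) T) as [z1 [Hz1 Hz1']]; try (unfold T; lra).
  destruct (H0 (-T) T) as [z0 [Hz0 Hz0']]; try (unfold T; lra).
  pose proof (ibp f j p (-T) T z0 z1 Hf Hz0 Hz1) as E.
  assert (Hu : forall x, T <= Rabs x -> Cmod (gj f j p x) <= e).
  { intros x Hx. eapply Rle_trans; [apply HB|]. rewrite hb0.
    assert (K <= e * T) by (unfold T; assert (K = e * (K / e)) by (field; lra); nra).
    assert (1 <= T) by (unfold T; lra).
    assert (Rabs x * Rabs x = x^2) by (rewrite <- Rabs_mult; rewrite Rabs_right; [ring|nra]).
    assert (T * T <= x^2) by nra.
    apply div_le_h. nra. }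
  assert (Eq : Cminus (Gj f (S j) p) (Cmult (0, p) (Gj f j p)) =
     Cplus (Cplus (Cminus (Gj f (S j) p) z1) (Cminus (gj f j p T) (gj f j p (-T)))) (Cmult (0,p) (Cminus z0 (Gj f j p)))).
  { rewrite E. ring. }
  rewrite Eq.
  eapply Rle_trans; [apply Cmod_triangle|].
  pose proof (Cmod_triangle (Cminus (Gj f (S j) p) z1) (Cminus (gj f j p T) (gj f j p (-T)))).
  assert (Cmod (Cminus (gj f j p T) (gj f j p (-T))) <= Cmod (gj f j p T) + Cmod (gj f j p (-T))) by (unfold Cminus; rewrite <- (Cmod_opp (gj f j p (-T))); apply Cmod_triangle).
  rewrite Cmod_mult, Cmod_ip.
  rewrite Cmod_diff_sym in Hz1'.
  pose proof (Hu T ltac:(rewrite Rabs_right; unfold T; lra)).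
  pose proof (Hu (-T) ltac:(rewrite Rabs_Ropp, Rabs_right; unfold T; lra)).
  assert (Rabs p * Cmod (Cminus z0 (Gj f j p)) <= Rabs p * e) by (apply Rmult_le_compat_l; [apply Rabs_pos| lra]).
  assert (e * (3 + Rabs p) = eps) by (unfold e; field; pose proof (Rabs_pos p); lra).
  lra.
Qed.

Lemma Gj_mod f j p : schwartz f -> Cmod (Gj f j p) = Rabs p ^ j * Cmod (Gj f 0 p).
Proof.
  intros Hf. induction j.
  - simpl; ring.
  - rewrite Gj_rel by auto. rewrite Cmod_mult, Cmod_ip, IHj. simpl; ring.
Qed.

Lemma cos_lip a b : Rabs (cos a - cos b) <= Rabs (a - b).
Proof.
  destruct (MVT_abs cos (fun c => - sin c) b a) as [c [Hc _]].
  { intros; apply derivable_pt_lim_cos. }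
  rewrite Hc. rewrite Rabs_Ropp. pose proof (SIN_bound c). 
  assert (Rabs (sin c) <= 1) by (apply Rabs_le; lra).
  pose proof (Rabs_pos (a - b)). nra.
Qed.
Lemma sin_lip a b : Rabs (sin a - sin b) <= Rabs (a - b).
Proof.
  destruct (MVT_abs sin cos b a) as [c [Hc _]].
  { intros; apply derivable_pt_lim_sin. }
  rewrite Hc. pose proof (COS_bound c). 
  assert (Rabs (cos c) <= 1) by (apply Rabs_le; lra).
  pose proof (Rabs_pos (a - b)). nra.
Qed.
Lemma cexpi_lip a b : Cmod (Cminus (cexpi a) (cexpi b)) <= 2 * Rabs (a - b).
Proof.
  eapply Rle_trans; [apply Cmod_le_sum|]. unfold cexpi, Cminus, Cplus, Copp; simpl.
  pose proof (cos_lip a b). pose proof (sin_lip a b). unfold Rminus in *. lra.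
Qed.

Definition cst := / sqrt (2 * PI).
Lemma cst_pos : 0 < cst.
Proof. unfold cst. apply Rinv_0_lt_compat. apply sqrt_lt_R0. pose proof PI_RGT_0; lra. Qed.
Lemma cst_le1 : cst <= 1.
Proof.
  unfold cst. rewrite <- Rinv_1. apply Rinv_le_contravar. lra.
  rewrite <- sqrt_1. apply sqrt_le_1_alt. pose proof PI2_1. lra.
Qed.

Lemma fourier_G f p : fourier f p = Cmult (RtoC cst) (Gj f 0 p).
Proof. unfold fourier, Gj, gj. rewrite fj0. reflexivity. Qed.

Lemma Cmod_fourier f p : Cmod (fourier f p) = cst * Cmod (Gj f 0 p).
Proof. rewrite fourier_G, Cmod_mult, Cmod_R, Rabs_right; auto. pose proof cst_pos; lra. Qed.

Lemma decay f j : schwartz f -> exists P, 0 <= P /\ forall p, Rabs p ^ j * Cmod (fourier f p) <= P.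
Proof.
  intros Hf. destruct (Gj_bound f j Hf) as [K [HK H]]. exists K. split; auto.
  intros p. rewrite Cmod_fourier.
  replace (Rabs p ^ j * (cst * Cmod (Gj f 0 p))) with (cst * Cmod (Gj f j p)) by (rewrite Gj_mod; auto; ring).
  pose proof cst_pos; pose proof cst_le1. pose proof (H p). pose proof (Cmod_ge_0 (Gj f j p)). nra.
Qed.

Lemma fourier_lip f : schwartz f -> exists L, 0 <= L /\ forall p q, Cmod (Cminus (fourier f p) (fourier f q)) <= L * Rabs (p - q).
Proof.
  intros Hf. destruct (f_bound_x f Hf) as [K [HK H]].
  exists (2 * K * PI). split. pose proof PI_RGT_0; nra.
  intros p q.
  assert (E : Cminus (fourier f p) (fourier f q) = Cmult (RtoC cst) (Cminus (Gj f 0 p) (Gj f 0 q))).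
  { rewrite !fourier_G. ring. }
  rewrite E, Cmod_mult, Cmod_R, Rabs_right by (pose proof cst_pos; lra).
  pose proof (is_RInt_gen_minus _ _ _ _ (gj_is f 0 p Hf) (gj_is f 0 q Hf)) as HI.
  assert (B : Cmod (Cminus (Gj f 0 p) (Gj f 0 q)) <= (2 * Rabs (p - q) * K + 0 * 1) * PI).
  { apply (NB (fun y => Cminus (gj f 0 p y) (gj f 0 q y)) _ (2 * Rabs (p - q) * K) 0 1 ltac:(lra)); try lra.
    - pose proof (Rabs_pos (p - q)); nra.
    - exact HI.
    - intros x. rewrite hb0. unfold gj. rewrite fj0.
      change (Cmod (Cminus (Cmult (cexpi (- (p * x))) (f x)) (Cmult (cexpi (- (q * x))) (f x))) <= 2 * Rabs (p - q) * K / (1 + x ^ 2)).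
      replace (Cminus (Cmult (cexpi (- (p * x))) (f x)) (Cmult (cexpi (- (q * x))) (f x))) with
        (Cmult (Cminus (cexpi (- (p * x))) (cexpi (- (q * x)))) (f x)) by ring.
      rewrite Cmod_mult. pose proof (cexpi_lip (- (p * x)) (- (q * x))).
      replace (- (p * x) - - (q * x)) with (- ((p - q) * x)) in H0 by ring.
      rewrite Rabs_Ropp, Rabs_mult in H0.
      pose proof (H x). pose proof (Cmod_ge_0 (f x)). pose proof (Rabs_pos (p - q)).
      assert (Cmod (Cminus (cexpi (- (p * x))) (cexpi (- (q * x)))) * Cmod (f x) <= 2 * (Rabs (p - q) * Rabs x) * Cmod (f x)) by (apply Rmult_le_compat_r; auto).
      assert (2 * (Rabs (p - q) * Rabs x) * Cmod (f x) = 2 * Rabs (p - q) * (Rabs x * Cmod (f x))) by ring.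
      assert (2 * Rabs (p - q) * (Rabs x * Cmod (f x)) <= 2 * Rabs (p - q) * (K / (1 + x^2))) by (apply Rmult_le_compat_l; nra).
      unfold Rdiv in *. lra. }
  pose proof cst_pos; pose proof cst_le1. pose proof (Cmod_ge_0 (Cminus (Gj f 0 p) (Gj f 0 q))).
  pose proof PI_RGT_0. pose proof (Rabs_pos (p - q)).
  assert (cst * Cmod (Cminus (Gj f 0 p) (Gj f 0 q)) <= Cmod (Cminus (Gj f 0 p) (Gj f 0 q))) by nra.
  nra.
Qed.

Lemma lip_cont (h : R -> R) L x : 0 <= L -> (forall p q, Rabs (h p - h q) <= L * Rabs (p - q)) -> continuous h x.
Proof.
  intros HL H. apply continuity_pt_filterlim.
  unfold continuity_pt, continue_in, limit1_in, limit_in. intros eps He.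
  exists (eps / (L + 1)). split. apply Rdiv_lt_0_compat; lra.
  intros y [_ Hy]. simpl in *. unfold R_dist in *.
  eapply Rle_lt_trans; [apply H|].
  assert (L * Rabs (y - x) <= L * (eps / (L + 1))) by (apply Rmult_le_compat_l; lra).
  assert (L * (eps / (L + 1)) < eps).
  { apply (Rmult_lt_reg_r (L + 1)). lra. replace (L * (eps / (L + 1)) * (L + 1)) with (L * eps) by (field; lra). nra. }
  lra.
Qed.

Lemma fourier_cont_fst f x : schwartz f -> continuous (fun p => fst (fourier f p)) x.
Proof.
  intros Hf. destruct (fourier_lip f Hf) as [L [HL H]]. apply (lip_cont _ L); auto.
  intros p q. eapply Rle_trans; [|apply H].
  change (fst (fourier f p) - fst (fourier f q)) with (fst (Cminus (fourier f p) (fourier f q))). apply re_le_Cmod.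
Qed.
Lemma fourier_cont_snd f x : schwartz f -> continuous (fun p => snd (fourier f p)) x.
Proof.
  intros Hf. destruct (fourier_lip f Hf) as [L [HL H]]. apply (lip_cont _ L); auto.
  intros p q. eapply Rle_trans; [|apply H].
  change (snd (fourier f p) - snd (fourier f q)) with (snd (Cminus (fourier f p) (fourier f q))). apply Rabs_snd_le.
Qed.

Lemma cont_eps (h : R -> R) x0 :
  (forall eps, 0 < eps -> exists delta, 0 < delta /\ forall y, Rabs (y - x0) < delta -> Rabs (h y - h x0) < eps) ->
  continuous h x0.
Proof.
  intros H. apply continuity_pt_filterlim.
  unfold continuity_pt, continue_in, limit1_in, limit_in. intros eps He.
  destruct (H eps He) as [d [Hd Hd']]. exists d. split; auto.
  intros y [_ Hy]. simpl in *. unfold R_dist in *. auto.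
Qed.

Lemma cmult_cont (u v : R -> C) x :
  continuous (fun p => fst (u p)) x -> continuous (fun p => snd (u p)) x ->
  continuous (fun p => fst (v p)) x -> continuous (fun p => snd (v p)) x ->
  continuous (fun p => fst (Cmult (u p) (v p))) x /\ continuous (fun p => snd (Cmult (u p) (v p))) x.
Proof.
  intros H1 H2 H3 H4. split.
  - change (continuous (fun p => fst (u p) * fst (v p) - snd (u p) * snd (v p)) x).
    apply cR_minus; apply cR_mult; auto.
  - change (continuous (fun p => fst (u p) * snd (v p) + snd (u p) * fst (v p)) x).
    apply cR_plus; apply cR_mult; auto.
Qed.

Lemma rpow_ge0 y a : 0 <= rpow y a.
Proof.
  unfold rpow. destruct (Req_EM_T y 0); [destruct (Req_EM_T a 0); lra|].
  unfold Rpower. left; apply exp_pos.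
Qed.

Lemma rpow_pos y a : 0 < y -> rpow y a = Rpower y a.
Proof. intros. unfold rpow. destruct (Req_EM_T y 0); [lra|auto]. Qed.

Lemma rpow_nat y n : 0 <= y -> rpow y (INR n) = y ^ n.
Proof.
  intros Hy. unfold rpow. destruct (Req_EM_T y 0) as [->|Hne].
  - destruct (Req_EM_T (INR n) 0) as [E|E].
    + destruct n. simpl; auto. rewrite S_INR in E. pose proof (pos_INR n). lra.
    + destruct n. simpl in E. lra. simpl. ring.
  - apply Rpower_pow. lra.
Qed.

Lemma rpow_zero_pos a : 0 < a -> rpow 0 a = 0.
Proof. intros. unfold rpow. destruct (Req_EM_T 0 0); [|lra]. destruct (Req_EM_T a 0); lra. Qed.

Lemma exp_le x y : x <= y -> exp x <= exp y.
Proof. intros [H|H]. left; apply exp_increasing; auto. subst; lra. Qed.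
Lemma ln_le' x y : 0 < x -> x <= y -> ln x <= ln y.
Proof. intros H [H'|H']. left; apply ln_increasing; auto. subst; lra. Qed.

Lemma Rpower_le1 y a : 0 < y <= 1 -> 0 <= a -> Rpower y a <= 1.
Proof.
  intros Hy Ha. unfold Rpower. rewrite <- exp_0. apply exp_le.
  pose proof (ln_le' y 1 ltac:(lra) ltac:(lra)). rewrite ln_1 in H. nra.
Qed.
Lemma Rpower_ge1 y a : 1 <= y -> 0 <= a -> 1 <= Rpower y a.
Proof.
  intros Hy Ha. unfold Rpower. rewrite <- exp_0. apply exp_le.
  pose proof (ln_le' 1 y ltac:(lra) ltac:(lra)). rewrite ln_1 in H. nra.
Qed.
Lemma Rpower_le_self y a : 1 <= y -> 0 <= a <= 1 -> Rpower y a <= y.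
Proof.
  intros Hy Ha. unfold Rpower. rewrite <- (exp_ln y) at 2 by lra. apply exp_le.
  pose proof (ln_le' 1 y ltac:(lra) ltac:(lra)). rewrite ln_1 in H. nra.
Qed.
Lemma Rpower_le_1y y a : 0 < y -> 0 <= a <= 1 -> Rpower y a <= 1 + y.
Proof.
  intros Hy Ha. destruct (Rle_or_lt y 1).
  - pose proof (Rpower_le1 y a ltac:(lra) ltac:(lra)). lra.
  - pose proof (Rpower_le_self y a ltac:(lra) ltac:(lra)). lra.
Qed.
Lemma Rpower_pos' y a : 0 < Rpower y a.
Proof. unfold Rpower; apply exp_pos. Qed.

Lemma rpow_bound_n y n a : 0 <= y -> INR n <= a <= INR n + 1 -> rpow y a <= y ^ n + y ^ (S n).
Proof.
  intros Hy Ha. destruct (Req_dec y 0) as [->|Hne].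
  - unfold rpow. destruct (Req_EM_T 0 0); [|lra]. destruct (Req_EM_T a 0) as [E|E].
    + subst. assert (n = 0%nat). { destruct n; auto. rewrite S_INR in Ha. pose proof (pos_INR n). lra. }
      subst. simpl. lra.
    + pose proof (pow_le 0 n ltac:(lra)). simpl. lra.
  - rewrite rpow_pos by lra.
    replace a with (INR n + (a - INR n)) by ring. rewrite Rpower_plus, Rpower_pow by lra.
    pose proof (Rpower_le_1y y (a - INR n) ltac:(lra) ltac:(lra)).
    pose proof (pow_le y n Hy). simpl. nra.
Qed.

Definition wp (p a : R) : C := if Rle_dec 0 p then i_pow a else mi_pow a.

Lemma ip_pow_form p a : ip_pow p a = Cmult (wp p a) (RtoC (rpow (Rabs p) a)).
Proof.
  unfold ip_pow, wp. destruct (Rle_dec 0 p); auto. rewrite Rabs_right; auto. lra.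
Qed.

Lemma Cmod_wp p a : Cmod (wp p a) = 1.
Proof.
  pose proof (sin2_cos2 (a * PI / 2)) as H; unfold Rsqr in H.
  unfold wp, i_pow, mi_pow, Cmod. destruct (Rle_dec 0 p); simpl;
  match goal with |- sqrt ?x = 1 => replace x with 1 by nra; apply sqrt_1 end.
Qed.

Lemma wp_lip p a b : Cmod (Cminus (wp p a) (wp p b)) <= PI * Rabs (a - b).
Proof.
  eapply Rle_trans; [apply Cmod_le_sum|].
  pose proof (cos_lip (a * PI / 2) (b * PI / 2)). pose proof (sin_lip (a * PI / 2) (b * PI / 2)).
  replace (a * PI / 2 - b * PI / 2) with ((a - b) * (PI / 2)) in H, H0 by field.
  rewrite Rabs_mult, (Rabs_right (PI/2)) in H, H0 by (pose proof PI_RGT_0; lra).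
  unfold wp, i_pow, mi_pow, Cminus, Cplus, Copp; destruct (Rle_dec 0 p); simpl.
  - unfold Rminus in *. lra.
  - replace (- sin (a * PI / 2) + - - sin (b * PI / 2)) with (- (sin (a * PI / 2) - sin (b * PI / 2))) by ring.
    rewrite Rabs_Ropp. unfold Rminus in *. lra.
Qed.

Lemma Cmod_ip_pow p a : Cmod (ip_pow p a) = rpow (Rabs p) a.
Proof.
  rewrite ip_pow_form, Cmod_mult, Cmod_wp, Cmod_R, Rabs_right. ring. apply Rle_ge, rpow_ge0.
Qed.

Lemma ip_pow_diff p a b :
  Cmod (Cminus (ip_pow p a) (ip_pow p b)) <= PI * Rabs (a - b) * rpow (Rabs p) a + Rabs (rpow (Rabs p) a - rpow (Rabs p) b).
Proof.
  rewrite !ip_pow_form.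
  replace (Cminus (Cmult (wp p a) (rpow (Rabs p) a)) (Cmult (wp p b) (rpow (Rabs p) b))) with
    (Cplus (Cmult (Cminus (wp p a) (wp p b)) (RtoC (rpow (Rabs p) a))) (Cmult (wp p b) (RtoC (rpow (Rabs p) a - rpow (Rabs p) b)))).
  2:{ rewrite RtoC_minus. ring. }
  eapply Rle_trans; [apply Cmod_triangle|].
  rewrite !Cmod_mult, Cmod_wp, !Cmod_R. rewrite (Rabs_right (rpow _ a)) by (apply Rle_ge, rpow_ge0).
  pose proof (wp_lip p a b). pose proof (rpow_ge0 (Rabs p) a).
  assert (Cmod (Cminus (wp p a) (wp p b)) * rpow (Rabs p) a <= PI * Rabs (a - b) * rpow (Rabs p) a) by (apply Rmult_le_compat_r; auto).
  lra.
Qed.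

Lemma ip_pow_a0 p : ip_pow p 0 = (1, 0).
Proof.
  rewrite ip_pow_form. 
  assert (rpow (Rabs p) 0 = 1).
  { unfold rpow. destruct (Req_EM_T (Rabs p) 0). destruct (Req_EM_T 0 0); lra.
    apply Rpower_O. pose proof (Rabs_pos p). lra. }
  rewrite H.
  unfold wp, i_pow, mi_pow, Cmult, RtoC; destruct (Rle_dec 0 p); simpl; replace (0 * PI / 2) with 0 by field; rewrite cos_0, sin_0; f_equal; ring.
Qed.

Lemma loc_pos x (P : R -> Prop) : 0 < x -> (forall y, 0 < y -> P y) -> locally x P.
Proof.
  intros Hx H. exists (mkposreal x Hx). intros y Hy. apply H.
  change (Rabs (y - x) < x) in Hy. apply Rabs_def2 in Hy. lra.
Qed.
Lemma loc_neg x (P : R -> Prop) : x < 0 -> (forall y, y < 0 -> P y) -> locally x P.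
Proof.
  intros Hx H. assert (Hx' : 0 < -x) by lra. exists (mkposreal (-x) Hx'). intros y Hy. apply H.
  change (Rabs (y - x) < -x) in Hy. apply Rabs_def2 in Hy. lra.
Qed.

Lemma ip_pow_pos_form y a : 0 < y -> ip_pow y a = (cos (a * PI / 2) * exp (a * ln y), sin (a * PI / 2) * exp (a * ln y)).
Proof.
  intros Hy. rewrite ip_pow_form, Rabs_right, rpow_pos by lra.
  unfold wp, i_pow, Cmult, RtoC, Rpower. destruct (Rle_dec 0 y); [|lra]. simpl. f_equal; ring.
Qed.
Lemma ip_pow_neg_form y a : y < 0 -> ip_pow y a = (cos (a * PI / 2) * exp (a * ln (-y)), - sin (a * PI / 2) * exp (a * ln (-y))).
Proof.
  intros Hy. rewrite ip_pow_form, Rabs_left, rpow_pos by lra.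
  unfold wp, mi_pow, Cmult, RtoC, Rpower. destruct (Rle_dec 0 y); [lra|]. simpl. f_equal; ring.
Qed.

Lemma comp_cont_C (u : R -> C) x0 :
  (forall eps, 0 < eps -> exists delta, 0 < delta /\ forall y, Rabs (y - x0) < delta -> Cmod (Cminus (u y) (u x0)) < eps) ->
  continuous (fun p => fst (u p)) x0 /\ continuous (fun p => snd (u p)) x0.
Proof.
  intros H. split; apply cont_eps; intros eps He; destruct (H eps He) as [d [Hd H']]; exists d; split; auto;
  intros y Hy; specialize (H' y Hy).
  - change (Rabs (fst (Cminus (u y) (u x0))) < eps). eapply Rle_lt_trans; [apply re_le_Cmod | exact H'].
  - change (Rabs (snd (Cminus (u y) (u x0))) < eps). eapply Rle_lt_trans; [apply Rabs_snd_le | exact H'].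
Qed.

Lemma ip_pow_cont a x : 0 <= a ->
  continuous (fun p => fst (ip_pow p a)) x /\ continuous (fun p => snd (ip_pow p a)) x.
Proof.
  intros Ha. destruct (Req_dec a 0) as [->|Ha0].
  { split.
    - apply (continuous_ext (fun _ => 1)). intros; rewrite ip_pow_a0; reflexivity. apply cR_const.
    - apply (continuous_ext (fun _ => 0)). intros; rewrite ip_pow_a0; reflexivity. apply cR_const. }
  destruct (Rtotal_order x 0) as [Hx|[Hx|Hx]].
  - split.
    + apply (continuous_ext_loc _ (fun y => cos (a * PI / 2) * exp (a * ln (-y)))).
      apply loc_neg; auto. intros y Hy. rewrite ip_pow_neg_form; auto.
      apply cR_der. auto_derive. lra.
    + apply (continuous_ext_loc _ (fun y => - sin (a * PI / 2) * exp (a * ln (-y)))).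
      apply loc_neg; auto. intros y Hy. rewrite ip_pow_neg_form; auto.
      apply cR_der. auto_derive. lra.
  - subst x. apply comp_cont_C. intros eps He.
    exists (Rpower eps (/ a)). split. apply Rpower_pos'.
    intros y Hy. rewrite Rminus_0_r in Hy.
    assert (E0 : ip_pow 0 a = (0,0)).
    { apply Cmod_eq_0. rewrite Cmod_ip_pow, Rabs_R0. apply rpow_zero_pos. lra. }
    rewrite E0. replace (Cminus (ip_pow y a) (0,0)) with (ip_pow y a) by (unfold Cminus, Cplus, Copp; simpl; destruct (ip_pow y a); simpl; f_equal; ring).
    rewrite Cmod_ip_pow. destruct (Req_dec y 0) as [->|Hy0].
    + rewrite Rabs_R0, rpow_zero_pos by lra. auto.
    + rewrite rpow_pos by (apply Rabs_pos_lt; auto).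
      replace eps with (Rpower (Rpower eps (/ a)) a).
      2:{ rewrite Rpower_mult. replace (/ a * a) with 1 by (field; auto). apply Rpower_1; auto. }
      apply Rlt_Rpower_l. lra. split; auto. apply Rabs_pos_lt; auto.
  - split.
    + apply (continuous_ext_loc _ (fun y => cos (a * PI / 2) * exp (a * ln y))).
      apply loc_pos; auto. intros y Hy. rewrite ip_pow_pos_form; auto.
      apply cR_der. auto_derive. lra.
    + apply (continuous_ext_loc _ (fun y => sin (a * PI / 2) * exp (a * ln y))).
      apply loc_pos; auto. intros y Hy. rewrite ip_pow_pos_form; auto.
      apply cR_der. auto_derive. lra.
Qed.

Definition qi (f : R -> C) (a x p : R) : C := Cmult (Cmult (cexpi (p * x)) (ip_pow p a)) (fourier f p).

Lemma cexpi_cont_fst x p0 : continuous (fun p => fst (cexpi (p * x))) p0.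
Proof. apply cR_der. unfold cexpi; simpl. auto_derive. auto. Qed.
Lemma cexpi_cont_snd x p0 : continuous (fun p => snd (cexpi (p * x))) p0.
Proof. apply cR_der. unfold cexpi; simpl. auto_derive. auto. Qed.

Lemma qi_exR f a x : schwartz f -> 0 <= a -> forall u v, @ex_RInt C_R_NormedModule (qi f a x) u v.
Proof.
  intros Hf Ha. apply ex_RInt_C; intros p0.
  - destruct (ip_pow_cont a p0 Ha) as [H1 H2].
    destruct (cmult_cont (fun p => cexpi (p * x)) (fun p => ip_pow p a) p0 (cexpi_cont_fst x p0) (cexpi_cont_snd x p0) H1 H2) as [H3 H4].
    apply (cmult_cont (fun p => Cmult (cexpi (p * x)) (ip_pow p a)) (fourier f) p0 H3 H4 (fourier_cont_fst f p0 Hf) (fourier_cont_snd f p0 Hf)).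
  - destruct (ip_pow_cont a p0 Ha) as [H1 H2].
    destruct (cmult_cont (fun p => cexpi (p * x)) (fun p => ip_pow p a) p0 (cexpi_cont_fst x p0) (cexpi_cont_snd x p0) H1 H2) as [H3 H4].
    apply (cmult_cont (fun p => Cmult (cexpi (p * x)) (ip_pow p a)) (fourier f) p0 H3 H4 (fourier_cont_fst f p0 Hf) (fourier_cont_snd f p0 Hf)).
Qed.

Lemma Cmod_qi f a x p : Cmod (qi f a x p) = rpow (Rabs p) a * Cmod (fourier f p).
Proof. unfold qi. rewrite !Cmod_mult, Cmod_cexpi, Cmod_ip_pow. ring. Qed.

Lemma Qbound f m : schwartz f -> exists Q, 0 <= Q /\ forall p, Rabs p ^ m * Cmod (fourier f p) <= Q / (1 + p^2).
Proof.
  intros Hf. destruct (decay f m Hf) as [P1 [HP1 H1]]. destruct (decay f (m + 2) Hf) as [P2 [HP2 H2]].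
  exists (P1 + P2). split. lra. intros p. apply le_div_h.
  specialize (H1 p); specialize (H2 p). rewrite pow_add in H2.
  assert (Rabs p ^ 2 = p ^ 2) by (rewrite RPow_abs; apply Rabs_right; nra).
  rewrite H in H2. nra.
Qed.

Lemma qi_bound f n a x : schwartz f -> INR n <= a <= INR n + 1 ->
  exists K, 0 <= K /\ forall p, Cmod (qi f a x p) <= hb K 0 1 p.
Proof.
  intros Hf Ha. destruct (Qbound f n Hf) as [Q1 [HQ1 H1]]. destruct (Qbound f (S n) Hf) as [Q2 [HQ2 H2]].
  exists (Q1 + Q2). split. lra. intros p. rewrite hb0, Cmod_qi.
  pose proof (rpow_bound_n (Rabs p) n a (Rabs_pos p) Ha). pose proof (Cmod_ge_0 (fourier f p)).
  specialize (H1 p); specialize (H2 p).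
  assert (rpow (Rabs p) a * Cmod (fourier f p) <= (Rabs p ^ n + Rabs p ^ S n) * Cmod (fourier f p)) by (apply Rmult_le_compat_r; auto).
  unfold Rdiv in *. lra.
Qed.

Lemma qi_is f n a x : schwartz f -> INR n <= a <= INR n + 1 ->
  is_RInt_gen (qi f a x) (Rbar_locally m_infty) (Rbar_locally p_infty) (int_R (qi f a x)).
Proof.
  intros Hf Ha. destruct (qi_bound f n a x Hf Ha) as [K [HK H]].
  unfold int_R. apply (RInt_gen_correct (V:=C_R_CompleteNormedModule)).
  apply (ex_gen _ K); auto. apply qi_exR; auto. pose proof (pos_INR n). lra.
Qed.

Lemma cont_eps_inv (h : R -> R) x0 : continuous h x0 ->
  forall eps, 0 < eps -> exists delta, 0 < delta /\ forall y, Rabs (y - x0) < delta -> Rabs (h y - h x0) < eps.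
Proof.
  intros H eps He. apply continuity_pt_filterlim in H.
  destruct (H eps He) as [d [Hd H']]. exists d; split; auto. intros y Hy.
  destruct (Req_dec y x0) as [->|Hne]. rewrite Rminus_diag, Rabs_R0. auto.
  apply (H' y). split. split. exact I. auto. exact Hy.
Qed.

Lemma conv_pow d R eta : 0 < d <= 1 -> 1 <= R -> 0 < eta ->
  exists N : nat, forall k : nat, (N <= k)%nat -> (1 <= k)%nat ->
    forall y, d <= y <= R -> Rabs (Rpower y (/ INR k) - 1) <= eta.
Proof.
  intros Hd HR He.
  assert (Hc : continuous exp 0) by (apply cR_der; auto_derive; auto).
  destruct (cont_eps_inv exp 0 Hc eta He) as [nu [Hnu Hexp]]. rewrite exp_0 in Hexp.
  destruct (INR_unbounded ((Rabs (ln R) + Rabs (ln d)) / nu)) as [N HN].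
  exists (S N). intros k Hk Hk1 y Hy.
  assert (HkN : INR (S N) <= INR k) by (apply le_INR; auto).
  assert (Hk0 : 0 < INR k) by (apply lt_0_INR; lia).
  rewrite S_INR in HkN.
  assert (HlnR : Rabs (ln R / INR k) < nu).
  { unfold Rdiv. rewrite Rabs_mult, (Rabs_right (/ INR k)) by (left; apply Rinv_0_lt_compat; auto).
    apply (Rmult_lt_reg_r (INR k)); auto. rewrite Rmult_assoc, Rinv_l by lra.
    assert ((Rabs (ln R) + Rabs (ln d)) < nu * INR N).
    { apply (Rmult_lt_reg_r (/ nu)). apply Rinv_0_lt_compat; auto.
      replace (nu * INR N * / nu) with (INR N) by (field; lra). exact HN. }
    pose proof (Rabs_pos (ln d)). nra. }
  assert (Hlnd : Rabs (ln d / INR k) < nu).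
  { unfold Rdiv. rewrite Rabs_mult, (Rabs_right (/ INR k)) by (left; apply Rinv_0_lt_compat; auto).
    apply (Rmult_lt_reg_r (INR k)); auto. rewrite Rmult_assoc, Rinv_l by lra.
    assert ((Rabs (ln R) + Rabs (ln d)) < nu * INR N).
    { apply (Rmult_lt_reg_r (/ nu)). apply Rinv_0_lt_compat; auto.
      replace (nu * INR N * / nu) with (INR N) by (field; lra). exact HN. }
    pose proof (Rabs_pos (ln R)). nra. }
  pose proof (Hexp (ln R / INR k) ltac:(rewrite Rminus_0_r; auto)) as E1.
  pose proof (Hexp (ln d / INR k) ltac:(rewrite Rminus_0_r; auto)) as E2.
  assert (Hik : 0 <= / INR k) by (left; apply Rinv_0_lt_compat; auto).
  pose proof (Rle_Rpower_l d y (/ INR k) Hik ltac:(lra)).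
  pose proof (Rle_Rpower_l y R (/ INR k) Hik ltac:(lra)).
  unfold Rpower in *.
  replace (/ INR k * ln R) with (ln R / INR k) in * by (unfold Rdiv; ring).
  replace (/ INR k * ln d) with (ln d / INR k) in * by (unfold Rdiv; ring).
  apply Rabs_le. apply Rabs_def2 in E1. apply Rabs_def2 in E2. lra.
Qed.

Lemma rdiff_pos y n nu : 0 < y -> rpow y (INR n + nu) - rpow y (INR n) = y ^ n * (Rpower y nu - 1).
Proof.
  intros Hy. rewrite !rpow_pos by auto. rewrite Rpower_plus, Rpower_pow by auto. ring.
Qed.

Lemma rdiff_small y n nu : 0 <= y <= 1 -> 0 < nu <= 1 -> Rabs (rpow y (INR n + nu) - rpow y (INR n)) <= 1.
Proof.
  intros Hy Hnu. destruct (Req_dec y 0) as [->|Hne].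
  - rewrite rpow_zero_pos by (pose proof (pos_INR n); lra). rewrite rpow_nat by lra.
    destruct n; simpl. rewrite Rabs_left by lra. lra. rewrite Rmult_0_l, Rminus_0_r, Rabs_R0. lra.
  - rewrite rdiff_pos by lra. rewrite Rabs_mult.
    pose proof (Rpower_le1 y nu ltac:(lra) ltac:(lra)). pose proof (Rpower_pos' y nu).
    rewrite (Rabs_left1 (_ - 1)) by lra.
    rewrite <- RPow_abs. rewrite Rabs_right by lra.
    assert (Hm : forall m, 0 <= y ^ m <= 1) by (induction m; simpl; nra). pose proof (Hm n). pose proof (pow_le y n ltac:(lra)). nra.
Qed.

Lemma pw (p Fp B0 Q0 Q1 Q2 nu d R eta : R) (n : nat) :
  0 <= Fp <= B0 ->
  Rabs p ^ n * Fp <= Q0 / (1 + p^2) -> Rabs p ^ (S n) * Fp <= Q1 / (1 + p^2) ->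
  Rabs p ^ (S (S n)) * Fp <= Q2 / (1 + p^2) ->
  0 < nu <= 1 -> 0 < d <= 1 -> 1 <= R -> 0 <= eta ->
  (forall y, d <= y <= R -> Rabs (Rpower y nu - 1) <= eta) ->
  (PI * Rabs nu * rpow (Rabs p) (INR n + nu) + Rabs (rpow (Rabs p) (INR n + nu) - rpow (Rabs p) (INR n))) * Fp
  <= hb (PI * nu * (Q0 + Q1) + eta * Q0 + Q2 / R) (2 * B0) d p.
Proof.
  intros HF H0 H1 H2 Hnu Hd HR Heta Hconv.
  set (y := Rabs p). assert (Hy : 0 <= y) by apply Rabs_pos.
  assert (Hp2 : p ^ 2 = y ^ 2) by (unfold y; rewrite RPow_abs; rewrite Rabs_right; nra).
  assert (Hden : 0 < 1 + p ^ 2) by nra.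
  assert (HQ0 : 0 <= Q0). { assert (0 <= Q0 / (1 + p^2)) by (pose proof (pow_le y n Hy); fold y in H0; nra).
    unfold Rdiv in H. apply Rmult_le_reg_r with (/ (1 + p^2)). apply Rinv_0_lt_compat; auto. lra. }
  assert (HQ2 : 0 <= Q2). { assert (0 <= Q2 / (1 + p^2)) by (pose proof (pow_le y (S (S n)) Hy); fold y in H2; nra).
    unfold Rdiv in H. apply Rmult_le_reg_r with (/ (1 + p^2)). apply Rinv_0_lt_compat; auto. lra. }
  fold y in H0, H1, H2 |- *.
  assert (T1 : PI * Rabs nu * rpow y (INR n + nu) * Fp <= PI * nu * (Q0 + Q1) / (1 + p^2)).
  { pose proof (rpow_bound_n y n (INR n + nu) Hy ltac:(lra)).
    rewrite Rabs_right by lra. pose proof PI_RGT_0.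
    assert (rpow y (INR n + nu) * Fp <= (y ^ n + y ^ S n) * Fp) by (apply Rmult_le_compat_r; lra).
    assert (rpow y (INR n + nu) * Fp <= (Q0 + Q1) / (1 + p^2)) by (unfold Rdiv in *; lra).
    assert (PI * nu * (rpow y (INR n + nu) * Fp) <= PI * nu * ((Q0 + Q1) / (1 + p^2))) by (apply Rmult_le_compat_l; nra).
    unfold Rdiv in *. lra. }
  set (T := Rabs (rpow y (INR n + nu) - rpow y (INR n))).
  assert (T2 : T * Fp <= eta * Q0 / (1 + p^2) + Q2 / R / (1 + p^2) + 2 * B0 / (1 + (p / d)^2)).
  { assert (Ea : 0 <= eta * Q0 / (1 + p^2)) by (apply Rdiv_le_0_compat; nra).
    assert (Eb : 0 <= Q2 / R / (1 + p^2)) by (apply Rdiv_le_0_compat; [apply Rdiv_le_0_compat; lra| nra]).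
    assert (Ec : 0 <= 2 * B0 / (1 + (p / d)^2)) by (apply Rdiv_le_0_compat; nra).
    destruct (Rlt_or_le y d) as [Hyd | Hyd].
    - assert (T <= 1) by (apply rdiff_small; lra).
      assert (Hpd : (p / d) ^ 2 <= 1).
      { replace ((p/d)^2) with (y^2 / d^2) by (rewrite <- Hp2; field; lra).
        apply Rle_div_l. nra. nra. }
      assert (B0 <= 2 * B0 / (1 + (p / d)^2)).
      { apply Rle_div_r. nra. nra. }
      assert (0 <= T) by apply Rabs_pos. nra.
    - assert (Hy0 : 0 < y) by lra.
      unfold T. rewrite rdiff_pos by auto. rewrite Rabs_mult, <- RPow_abs, (Rabs_right y) by lra.
      destruct (Rle_or_lt y R) as [HyR | HyR].
      + pose proof (Hconv y ltac:(lra)). pose proof (pow_le y n Hy). pose proof (Rabs_pos (Rpower y nu - 1)).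
        assert (y ^ n * Rabs (Rpower y nu - 1) * Fp <= eta * (y ^ n * Fp)).
        { replace (y ^ n * Rabs (Rpower y nu - 1) * Fp) with (Rabs (Rpower y nu - 1) * (y ^ n * Fp)) by ring.
          apply Rmult_le_compat_r; nra. }
        assert (eta * (y ^ n * Fp) <= eta * (Q0 / (1 + p ^ 2))) by (apply Rmult_le_compat_l; auto).
        unfold Rdiv in *. lra.
      + pose proof (Rpower_ge1 y nu ltac:(lra) ltac:(lra)).
        pose proof (Rpower_le_self y nu ltac:(lra) ltac:(lra)).
        rewrite Rabs_right by lra. pose proof (pow_le y n Hy).
        assert (y ^ n * (Rpower y nu - 1) * Fp <= y ^ S n * Fp).
        { simpl. replace (y * y ^ n * Fp) with (y ^ n * Fp * y) by ring.
          replace (y ^ n * (Rpower y nu - 1) * Fp) with (y ^ n * Fp * (Rpower y nu - 1)) by ring.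
          apply Rmult_le_compat_l; nra. }
        assert (y ^ S n * Fp * R <= y ^ S (S n) * Fp).
        { replace (y ^ S (S n) * Fp) with (y ^ S n * Fp * y) by (simpl; ring).
          apply Rmult_le_compat_l. pose proof (pow_le y (S n) Hy); nra. lra. }
        assert (y ^ S n * Fp <= Q2 / R / (1 + p ^ 2)).
        { unfold Rdiv. apply (Rmult_le_reg_r R). lra.
          replace (Q2 * / R * / (1 + p ^ 2) * R) with (Q2 / (1 + p ^ 2)) by (field; lra). lra. }
        lra. }
  unfold hb.
  replace ((PI * Rabs nu * rpow y (INR n + nu) + T) * Fp) with (PI * Rabs nu * rpow y (INR n + nu) * Fp + T * Fp) by ring.
  replace ((PI * nu * (Q0 + Q1) + eta * Q0 + Q2 / R) / (1 + p ^ 2)) with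
    (PI * nu * (Q0 + Q1) / (1 + p^2) + eta * Q0 / (1 + p ^ 2) + Q2 / R / (1 + p ^ 2)) by (field; lra).
  lra.
Qed.

Theorem theorem3 (f : R -> C) (n : nat) (hf : schwartz f) :
  forall eps : R, 0 < eps ->
  exists N : nat, forall k : nat, (N <= k)%nat -> (1 <= k)%nat ->
    forall x : R,
      Cmod (Cminus (fracD (INR n + / INR k) f x) (fracD (INR n) f x)) < eps.
Proof.
  intros eps He.
  pose proof PI_RGT_0 as Hpi.
  destruct (decay f 0 hf) as [P0 [HP0 HB0]].
  assert (HB0' : forall p, Cmod (fourier f p) <= P0) by (intros p; specialize (HB0 p); simpl in HB0; lra).
  destruct (Qbound f n hf) as [Q0 [HQ0 H0]].
  destruct (Qbound f (S n) hf) as [Q1 [HQ1 H1]].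
  destruct (Qbound f (S (S n)) hf) as [Q2 [HQ2 H2]].
  set (d := Rmin 1 (eps / (8 * P0 * PI + 1))).
  assert (Hd0 : 0 < eps / (8 * P0 * PI + 1)) by (apply Rdiv_lt_0_compat; nra).
  assert (Hd : 0 < d <= 1) by (unfold d; split; [apply Rmin_glb_lt; lra| apply Rmin_l]).
  assert (Hd2 : d <= eps / (8 * P0 * PI + 1)) by apply Rmin_r.
  set (R := Rmax 1 (4 * Q2 * PI / eps + 1)).
  assert (HR : 1 <= R) by apply Rmax_l.
  assert (HR2 : 4 * Q2 * PI / eps + 1 <= R) by apply Rmax_r.
  set (eta := eps / (4 * Q0 * PI + 4)).
  assert (Heta : 0 < eta) by (apply Rdiv_lt_0_compat; nra).
  destruct (conv_pow d R eta Hd HR Heta) as [N1 HN1].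
  destruct (INR_unbounded (4 * PI * PI * (Q0 + Q1) / eps)) as [N2 HN2].
  exists (Nat.max N1 N2). intros k Hk Hk1 x.
  assert (HkN1 : (N1 <= k)%nat) by lia.
  assert (HkN2 : INR N2 <= INR k) by (apply le_INR; lia).
  assert (Hk1' : 1 <= INR k) by (apply (le_INR 1 k) in Hk1; simpl in Hk1; lra).
  set (nu := / INR k).
  assert (Hnu : 0 < nu <= 1).
  { unfold nu. split. apply Rinv_0_lt_compat; lra. rewrite <- Rinv_1. apply Rinv_le_contravar; lra. }
  assert (Hn0 : 0 <= INR n) by apply pos_INR.
  set (A := PI * nu * (Q0 + Q1) + eta * Q0 + Q2 / R).
  assert (HA : 0 <= A).
  { unfold A. assert (0 <= Q2 / R) by (apply Rdiv_le_0_compat; lra). 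
    assert (0 <= PI * nu * (Q0 + Q1)) by (apply Rmult_le_pos; nra). nra. }
  pose proof (qi_is f n (INR n + nu) x hf ltac:(lra)) as Ia.
  pose proof (qi_is f n (INR n) x hf ltac:(lra)) as Ib.
  pose proof (is_RInt_gen_minus _ _ _ _ Ia Ib) as HI.
  assert (Bnd : Cmod (Cminus (int_R (qi f (INR n + nu) x)) (int_R (qi f (INR n) x))) <= (A + 2 * P0 * d) * PI).
  { apply (NB (fun p => Cminus (qi f (INR n + nu) x p) (qi f (INR n) x p)) _ A (2 * P0) d); try lra.
    - exact HI.
    - intros p.
      replace (Cminus (qi f (INR n + nu) x p) (qi f (INR n) x p)) with
        (Cmult (Cmult (cexpi (p * x)) (Cminus (ip_pow p (INR n + nu)) (ip_pow p (INR n)))) (fourier f p))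
        by (unfold qi; ring).
      rewrite !Cmod_mult, Cmod_cexpi, Rmult_1_l.
      pose proof (ip_pow_diff p (INR n + nu) (INR n)) as D.
      replace (INR n + nu - INR n) with nu in D by ring.
      pose proof (Cmod_ge_0 (fourier f p)).
      eapply Rle_trans. apply Rmult_le_compat_r; [auto | exact D].
      apply (pw p (Cmod (fourier f p)) P0 Q0 Q1 Q2 nu d R eta n); auto; try lra.
      intros y Hy. apply (HN1 k HkN1 Hk1 y Hy). }
  unfold fracD. change (fun p => Cmult (Cmult (cexpi (p * x)) (ip_pow p (INR n + nu))) (fourier f p)) with (qi f (INR n + nu) x).
  change (fun p => Cmult (Cmult (cexpi (p * x)) (ip_pow p (INR n))) (fourier f p)) with (qi f (INR n) x).
  replace (Cminus (Cmult (RtoC (/ sqrt (2 * PI))) (int_R (qi f (INR n + nu) x))) (Cmult (RtoC (/ sqrt (2 * PI))) (int_R (qi f (INR n) x))))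
    with (Cmult (RtoC cst) (Cminus (int_R (qi f (INR n + nu) x)) (int_R (qi f (INR n) x)))) by (unfold cst; ring).
  rewrite Cmod_mult, Cmod_R, Rabs_right by (pose proof cst_pos; lra).
  pose proof cst_pos. pose proof cst_le1.
  pose proof (Cmod_ge_0 (Cminus (int_R (qi f (INR n + nu) x)) (int_R (qi f (INR n) x)))).
  assert (Hfin : cst * Cmod (Cminus (int_R (qi f (INR n + nu) x)) (int_R (qi f (INR n) x))) <= (A + 2 * P0 * d) * PI) by nra.
  assert (E1 : PI * nu * (Q0 + Q1) * PI < eps / 4).
  { unfold nu. assert (0 < INR k) by lra.
    assert (4 * PI * PI * (Q0 + Q1) / eps < INR k) by lra.
    apply (Rmult_lt_reg_r (INR k * 4 / eps)). apply Rdiv_lt_0_compat; lra.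
    replace (PI * / INR k * (Q0 + Q1) * PI * (INR k * 4 / eps)) with (4 * PI * PI * (Q0 + Q1) / eps) by (field; lra).
    replace (eps / 4 * (INR k * 4 / eps)) with (INR k) by (field; lra). lra. }
  assert (E2 : eta * Q0 * PI < eps / 4).
  { unfold eta. apply (Rmult_lt_reg_r (4 * Q0 * PI + 4)). nra.
    replace (eps / (4 * Q0 * PI + 4) * Q0 * PI * (4 * Q0 * PI + 4)) with (eps * Q0 * PI) by (field; nra).
    replace (eps / 4 * (4 * Q0 * PI + 4)) with (eps * Q0 * PI + eps) by field. lra. }
  assert (E3 : Q2 / R * PI < eps / 4).
  { apply (Rmult_lt_reg_r (4 * R / eps)). apply Rdiv_lt_0_compat; lra.
    replace (Q2 / R * PI * (4 * R / eps)) with (4 * Q2 * PI / eps) by (field; lra).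
    replace (eps / 4 * (4 * R / eps)) with R by (field; lra). lra. }
  assert (E4 : 2 * P0 * d * PI < eps / 4).
  { assert (2 * P0 * d * PI <= 2 * P0 * PI * (eps / (8 * P0 * PI + 1))).
    { replace (2 * P0 * d * PI) with (2 * P0 * PI * d) by ring. apply Rmult_le_compat_l; nra. }
    assert (2 * P0 * PI * (eps / (8 * P0 * PI + 1)) < eps / 4).
    { apply (Rmult_lt_reg_r (8 * P0 * PI + 1)). nra.
      replace (2 * P0 * PI * (eps / (8 * P0 * PI + 1)) * (8 * P0 * PI + 1)) with (2 * P0 * PI * eps) by (field; nra).
      nra. }
    lra. }
  replace ((A + 2 * P0 * d) * PI) with (PI * nu * (Q0 + Q1) * PI + eta * Q0 * PI + Q2 / R * PI + 2 * P0 * d * PI) in Hfin by (unfold A; ring).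
  lra.
Qed.
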